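(* Either let all graphs below be undirected, or let all be directed. Let $D_0$ be a graph on $k$ vertices $v_1,\dots,v_k$ and let $D_1,\dots,D_k$ be graphs; let $f_i=f(D_i)$ and $n_i=n(D_i)$ for $0\le i\le k$, and for each $0\leq i\leq k$ let $R_i$ be a nonempty bad set of $D_i$. Let $D$ be obtained from the disjoint union of $D_1,\dots,D_k$ by adding, for every arc (resp. edge) $v_iv_j$ of $D_0$, all arcs from every vertex of $R_i\subseteq V(D_i)$ to every vertex of $R_j\subseteq V(D_j)$ (resp. all edges between $R_i$ and $R_j$). Then: \begin{enumerate} \item $n(D)=n_1+\dots+n_k$ and $f(D)\geq f_0+f_1+\dots+f_k$; \item if $R_i$ is an inclusion-wise minimal bad set of $D_i$ for every $1\leq i\leq k$, then $f(D)=\sum_{0\le i\le k} f_i$ and $R=\bigcup_{v_i\in R_0}R_i$ is a bad set of $D$; \item if moreover $R_1,\dots,R_k$ are cliques of size at most $c$, the underlying graphs of $D_1,\dots,D_k$ are chordal and have treewidth at most $t$, and $D_0$ has treewidth at most $t_0$, then $D$ has treewidth at most $\max\bigl(t,\,c(t_0+1)-1\bigr)$. \end{enumerate}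
   Context: Undirected graphs are finite and simple; directed graphs are oriented graphs (no loops, no multiple arcs, no antiparallel arcs). $n(H)$ is the number of vertices of $H$; $f(H)$ is the minimum size of a feedback vertex set, i.e. of a set $F\subseteq V(H)$ such that $H-F$ has no (directed, in the directed case) cycle. A set $R\subseteq V(H)$ is bad if it is not contained in any minimum feedback vertex set of $H$. A graph is chordal if it has a vertex ordering in which, for every vertex, its neighbours preceding it form a clique. A $k$-tree is a graph with a vertex ordering $\phi$ in which, for every vertex $v$, the preceding neighbours form a clique of size exactly $\min(k,\phi(v)-1)$; a graph has treewidth at most $k$ if it is a subgraph of a $k$-tree. Treewidth and cliques of a directed graph refer to its underlying undirected graph. *)

(* Defs.v *)
From mathcomp Require Import all_boot.
From mathcomp Require Import boolp.
Set Implicit Arguments. Unset Strict Implicit. Unset Printing Implicit Defensive.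

Definition is_graph (dir : bool) (T : finType) (e : rel T) : Prop :=
  irreflexive e /\
  (if dir then forall x y, e x y -> ~~ e y x else symmetric e).

Definition min_cycle_len (dir : bool) : nat := if dir then 2 else 3.

Definition is_cycle (dir : bool) (T : finType) (e : rel T) (s : seq T) : Prop :=
  [/\ uniq s, min_cycle_len dir <= size s & cycle e s].

Definition fvs (dir : bool) (T : finType) (e : rel T) (F : {set T}) : Prop :=
  forall s, is_cycle dir e s -> has (mem F) s.

Lemma fvs_setT (dir : bool) (T : finType) (e : rel T) : fvs dir e setT.
Proof.
move=> [|x s] [_ Hs _]; first by case: dir Hs.
by rewrite /= in_setT.
Qed.

Lemma fvn_ex (dir : bool) (T : finType) (e : rel T) :
  exists n, (fun k => `[< exists F : {set T}, fvs dir e F /\ #|F| = k >]) n.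
Proof. by exists #|[set: T]|; apply/asboolP; exists setT; split=> //; apply: fvs_setT. Qed.

Definition fvn (dir : bool) (T : finType) (e : rel T) : nat := ex_minn (fvn_ex dir e).

Definition min_fvs (dir : bool) (T : finType) (e : rel T) (F : {set T}) : Prop :=
  fvs dir e F /\ #|F| = fvn dir e.

Definition bad (dir : bool) (T : finType) (e : rel T) (R : {set T}) : Prop :=
  forall F, min_fvs dir e F -> ~ (R \subset F).

Definition minimal_bad (dir : bool) (T : finType) (e : rel T) (R : {set T}) : Prop :=
  bad dir e R /\ forall R' : {set T}, R' \proper R -> ~ bad dir e R'.

Definition ug (T : finType) (e : rel T) : rel T := fun x y => e x y || e y x.

Definition is_clique (T : finType) (e : rel T) (A : {set T}) : Prop :=
  forall x y, x \in A -> y \in A -> x != y -> e x y.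

Definition chordal (T : finType) (e : rel T) : Prop :=
  exists phi : T -> 'I_#|T|, injective phi /\
    forall v, is_clique e [set u | e u v & phi u < phi v].

(* k-tree: undirected graph with an ordering phi (0-based position phi v, so
   phi v = phi(v) - 1 in 1-based terms) in which the preceding neighbours of
   each vertex form a clique of size exactly min(k, phi v). *)
Definition ktree (k : nat) (S : finType) (h : rel S) : Prop :=
  is_graph false h /\
  exists phi : S -> 'I_#|S|, injective phi /\
    forall v, is_clique h [set u | h u v & phi u < phi v] /\
              #|[set u | h u v & phi u < phi v]| = minn k (phi v).

Definition tw_le (T : finType) (e : rel T) (k : nat) : Prop :=
  exists (S : finType) (h : rel S) (g : T -> S),
    [/\ ktree k h, injective g & forall x y, ug e x y -> h (g x) (g y)].

Definition compose (k : nat) (e0 : rel 'I_k) (T : 'I_k -> finType)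
  (e : forall i, rel (T i)) (R : forall i, {set T i}) : rel {i : 'I_k & T i} :=
  fun x y =>
    if tag x == tag y then e (tag x) (tagged x) (tagged_as x y)
    else [&& e0 (tag x) (tag y), tagged x \in R (tag x) & tagged y \in R (tag y)].

Definition compose_set (k : nat) (T : 'I_k -> finType) (R0 : {set 'I_k})
  (R : forall i, {set T i}) : {set {i : 'I_k & T i}} :=
  [set x | (tag x \in R0) && (tagged x \in R (tag x))].

(* Main.v *)
Require Import Defs.
From mathcomp Require Import all_boot.
From mathcomp Require Import boolp zify.
Set Implicit Arguments. Unset Strict Implicit. Unset Printing Implicit Defensive.


Lemma card_sig (I : finType) (T : I -> finType) (A : {set {i : I & T i}}) :
  #|A| = \sum_i #|[set a : T i | Tagged T a \in A]|.
Proof.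
rewrite -sum1_card (partition_big (fun x => tag x) predT) //=.
apply: eq_bigr => i _.
rewrite -(card_imset _ (@eq_from_Tagged _ T i)) -sum1_card.
apply: eq_bigl => x; case: x => j a /=.
apply/andP/imsetP.
  by move=> [Ha /eqP Hj]; subst j; exists a; rewrite ?inE.
move=> [b]; rewrite inE => Hb Heq.
have Hj : j = i by exact: (congr1 tag Heq).
subst j; by rewrite (eq_from_Tagged Heq).
Qed.

Lemma fvn_le dir (T : finType) (e : rel T) F : fvs dir e F -> fvn dir e <= #|F|.
Proof.
move=> H; rewrite /fvn; case: ex_minnP => m _; apply; apply/asboolP; by exists F.
Qed.

Lemma fvn_exF dir (T : finType) (e : rel T) : exists F, min_fvs dir e F.
Proof.
rewrite /min_fvs /fvn; case: ex_minnP => m /asboolP [F [H1 H2]] _; by exists F.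
Qed.

Lemma is_clique_sub (T : finType) (e : rel T) (A B : {set T}) :
  A \subset B -> is_clique e B -> is_clique e A.
Proof. move=> /subsetP sAB HB x y /sAB Hx /sAB Hy; exact: HB. Qed.


Section Part1.
Unset Implicit Arguments.
Variables (dir : bool) (k : nat) (e0 : rel 'I_k) (T : 'I_k -> finType)
  (e : forall i, rel (T i)) (R : forall i, {set T i}).
Set Implicit Arguments.

Local Notation D := (compose e0 e R).

Lemma compose_same i (a b : T i) : D (Tagged T a) (Tagged T b) = e i a b.
Proof. by rewrite /compose /= eqxx tagged_asE. Qed.

Lemma compose_diff i j (a : T i) (b : T j) : i != j ->
  D (Tagged T a) (Tagged T b) = [&& e0 i j, a \in R i & b \in R j].
Proof. by move=> Hij; rewrite /compose /= (negbTE Hij). Qed.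

Definition proj (F : {set {i : 'I_k & T i}}) i := [set a : T i | Tagged T a \in F].

Lemma fvs_proj F i : fvs dir D F -> fvs dir (e i) (proj F i).
Proof.
move=> HF s [Hu Hs Hc].
have := HF (map (Tagged T) s).
rewrite has_map.
have -> : has (preim (Tagged T) (mem F)) s = has (mem (proj F i)) s.
  by apply: eq_has => a; rewrite /= /proj inE.
apply; split.
- by rewrite (map_inj_uniq (@eq_from_Tagged _ T i)).
- by rewrite size_map.
- rewrite cycle_map; apply: sub_cycle Hc => a b; by rewrite /relpre /= compose_same.
Qed.

Definition Jset F := [set i | R i \subset proj F i].

Hypothesis e0irr : irreflexive e0.

Lemma J_fvs F : fvs dir D F -> fvs dir e0 (Jset F).
Proof.
move=> HF s [Hu Hs Hc].
apply/negPn/negP => Hn.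
have HnJ : forall i, i \in s -> i \notin Jset F.
  by move=> i Hi; apply/negP => HJ; move/negP: Hn; apply; apply/hasP; exists i.
pose Z := [set x : {i : 'I_k & T i} | (tagged x \in R (tag x)) && (x \notin F)].
have Hex : forall i, i \in s -> exists x, (x \in Z) && (tag x == i).
  move=> i /HnJ; rewrite inE => /subsetPn [a Ha Hna].
  exists (Tagged T a); rewrite inE /= Ha eqxx andbT /=.
  by move: Hna; rewrite /proj inE.
case Es: s (Hs) => [|i0 s0]; first by case: dir.
move=> _.
have [x0 _] : exists x, (x \in Z) && (tag x == i0) by apply: Hex; rewrite Es mem_head.
pose f i := odflt x0 [pick x in Z | tag x == i].
have Hf : forall i, i \in s -> (f i \in Z) /\ tag (f i) = i.
  move=> i /Hex Hi; rewrite /f; case: pickP => [x /andP [Hx /eqP Ht] | Hnone] /=.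
    by [].
  by exfalso; case: Hi => x Hx; move: (Hnone x); rewrite Hx.
have Hnot : has (mem F) (map f s) = false.
  apply/negbTE/hasPn => y /mapP [i Hi ->].
  by have [] := Hf i Hi; rewrite inE => /andP [].
suff : has (mem F) (map f s) by rewrite Hnot.
apply: HF; split.
- rewrite map_inj_in_uniq // => i j Hi Hj Hij.
  by rewrite -(Hf i Hi).2 -(Hf j Hj).2 Hij.
- by rewrite size_map.
- rewrite cycle_map; apply: (sub_in_cycle (P := mem s)) Hc; last by apply/allP.
  move=> i j Hi Hj Hij /=.
  have Hne : i != j by apply/eqP => Heq; subst j; rewrite e0irr in Hij.
  have [Zi Ti] := Hf i Hi; have [Zj Tj] := Hf j Hj.
  have Htag : (tag (f i) == tag (f j)) = false by rewrite Ti Tj (negbTE Hne).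
  rewrite /compose Htag; apply/and3P; split.
  + by rewrite Ti Tj.
  + by move: Zi; rewrite inE => /andP [].
  + by move: Zj; rewrite inE => /andP [].
Qed.

Lemma J_card F : fvs dir D F -> (forall i, bad dir (e i) (R i)) ->
  \sum_i fvn dir (e i) + #|Jset F| <= #|F|.
Proof.
move=> HF Hbad.
rewrite (card_sig F) -sum1_card [\sum_(i in Jset F) 1]big_mkcond -big_split /=.
apply: leq_sum => i _.
have Hle := fvn_le (fvs_proj (i:=i) HF).
case: ifP => HJ; last by rewrite addn0.
rewrite addn1 ltn_neqAle Hle andbT.
apply/eqP => Heq; apply: (Hbad i (proj F i)); first by split; [exact: fvs_proj|].
by move: HJ; rewrite inE.
Qed.

End Part1.


Section Part2.
Unset Implicit Arguments.
Variables (dir : bool) (k : nat) (e0 : rel 'I_k) (T : 'I_k -> finType)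
  (e : forall i, rel (T i)) (R : forall i, {set T i})
  (r : forall i, T i) (M : forall i, {set T i}) (F0 : {set 'I_k}).
Set Implicit Arguments.
Hypothesis e0irr : irreflexive e0.
Hypothesis eirr : forall i, irreflexive (e i).
Hypothesis rR : forall i, r i \in R i.
Hypothesis Mfvs : forall i, fvs dir (e i) (M i).
Hypothesis RM : forall i, R i :\ r i \subset M i.
Hypothesis F0fvs : fvs dir e0 F0.

Local Notation D := (compose e0 e R).

Definition Fset := [set x : {i : 'I_k & T i} |
   (tagged x \in M (tag x)) || ((tag x \in F0) && (tagged x == r (tag x)))].

Definition good (x : {i : 'I_k & T i}) := tagged x == r (tag x).

Lemma good_eq x y : good x -> good y -> tag x = tag y -> x = y.
Proof.
case: x => i a; case: y => j b; rewrite /good /= => /eqP -> /eqP -> Hij.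
by subst j.
Qed.

Lemma Rgood x : tagged x \in R (tag x) -> x \notin Fset -> good x.
Proof.
case: x => i a /=; rewrite inE negb_or /= => Ha /andP [HM _].
rewrite /good /=; apply/negPn/negP => Hne.
move/negP: HM; apply; apply: (subsetP (RM i)).
by rewrite !inE Hne Ha.
Qed.

Lemma cross x y : D x y -> tag x != tag y -> x \notin Fset -> y \notin Fset ->
  good x /\ good y.
Proof.
rewrite /compose => + Hne; rewrite (negbTE Hne) => /and3P [_ Hx Hy] Fx Fy.
by split; apply: Rgood.
Qed.

Lemma Dirr x : D x x = false.
Proof. by case: x => i a; rewrite compose_same eirr. Qed.

Lemma exitL i p x : path D x p -> all (fun z => z \notin Fset) (x :: p) ->
  tag x != i -> (forall z, z \in x :: p -> good z -> tag z != i) ->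
  tag (last x p) != i.
Proof.
elim: p x => [|w p IH] x //= /andP [Hxw Hp] /and3P [Fx Fw Fp] Hx Hg.
have Hw : tag w != i.
  apply/negP => /eqP Hw.
  have Hne : tag x != tag w by rewrite Hw.
  have [_ Gw] := cross Hxw Hne Fx Fw.
  by move: (Hg w); rewrite inE mem_head orbT Hw eqxx => /(_ isT Gw).
apply: IH => //; first by rewrite /= Fw.
by move=> z Hz; apply: Hg; rewrite inE Hz orbT.
Qed.

Lemma runH p x : path D x p -> all (fun z => z \notin Fset) (x :: p) ->
  uniq (x :: p) -> tag (last x p) = tag x ->
  all (fun z => tag z == tag x) (x :: p).
Proof.
elim: p x => [|w p IH] x /=; first by rewrite eqxx.
move=> /andP [Hxw Hp] /and3P [Fx Fw Fp] /andP [Hxn Hu] Hl.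
case: (eqVneq (tag w) (tag x)) => Htw.
  have Hall : all (fun z => z \notin Fset) (w :: p) by rewrite /= Fw Fp.
  have Hl' : tag (last w p) = tag w by rewrite Hl Htw.
  have Ha := IH w Hp Hall Hu Hl'.
  rewrite eqxx /=; apply/allP => z Hz.
  by move/allP: Ha => /(_ z); rewrite inE Hz orbT Htw => /(_ isT).
have Hne : tag x != tag w by rewrite eq_sym.
have [Gx _] := cross Hxw Hne Fx Fw.
exfalso.
suff : tag (last w p) != tag x by rewrite Hl eqxx.
apply: (exitL (i:=tag x) Hp _ Htw); first by rewrite /= Fw Fp.
move=> z Hz Gz; apply/negP => /eqP Hzt.
have Ezx := good_eq Gz Gx Hzt.
subst z; by rewrite Hz in Hxn.
Qed.


Lemma tagged_asT (x0 z : {i : 'I_k & T i}) : tag z = tag x0 -> Tagged T (tagged_as x0 z) = z.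
Proof. case: x0 => i a; case: z => j b /= Hj; subst j; by rewrite tagged_asE. Qed.

Lemma same_tag_false (s : seq {i : 'I_k & T i}) (x0 : {i : 'I_k & T i}) : (forall z, z \in s -> tag z = tag x0) -> uniq s ->
  min_cycle_len dir <= size s -> cycle D s -> all (fun z => z \notin Fset) s -> False.
Proof.
move=> Ht Hu Hs Hc Hn.
pose f z := tagged_as x0 z.
have Ef : forall z, z \in s -> Tagged T (f z) = z.
  by move=> z Hz; apply: tagged_asT; exact: Ht.
have Hnot : has (mem (M (tag x0))) (map f s) = false.
  apply/negbTE/hasPn => a /mapP [z Hz ->] /=.
  move/allP: Hn => /(_ z Hz); rewrite -{1}(Ef z Hz) inE /= negb_or => /andP [H _].
  exact H.
suff : has (mem (M (tag x0))) (map f s) by rewrite Hnot.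
apply: Mfvs; split.
- rewrite map_inj_in_uniq // => z w Hz Hw Hzw.
  by rewrite -(Ef z Hz) -(Ef w Hw) Hzw.
- by rewrite size_map.
- rewrite cycle_map; apply: (sub_in_cycle (P := mem s)) Hc; last by apply/allP.
  move=> z w Hz Hw Hzw; rewrite /relpre /= -(@compose_same k e0 T e R) (Ef z Hz) (Ef w Hw).
  exact Hzw.
Qed.

Lemma Fset_fvs : fvs dir D Fset.
Proof.
move=> s [Hu Hs Hc]; apply/negPn/negP => Hn.
have Hall : all (fun z => z \notin Fset) s.
  apply/allP => z Hz; apply/negP => HF; move/negP: Hn; apply; apply/hasP; by exists z.
case: (boolP (all good s)) => Hg.
  have Hnot : has (mem F0) (map (fun z => tag z) s) = false.
    apply/negbTE/hasPn => a /mapP [z Hz ->] /=; apply/negP => HF0.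
    move/allP: Hall => /(_ z Hz); rewrite inE negb_or => /andP [_].
    by rewrite HF0; move: (allP Hg z Hz); rewrite /good => ->.
  suff : has (mem F0) (map (fun z => tag z) s) by rewrite Hnot.
  apply: F0fvs; split.
  - rewrite map_inj_in_uniq // => z w Hz Hw.
    exact: good_eq (allP Hg z Hz) (allP Hg w Hw).
  - by rewrite size_map.
  - rewrite cycle_map; apply: (sub_in_cycle (P := mem s)) Hc; last by apply/allP.
    move=> z w Hz Hw Hzw; rewrite /relpre /=.
    case: (eqVneq (tag z) (tag w)) => Hzw'.
      have Ezw := good_eq (allP Hg z Hz) (allP Hg w Hw) Hzw'.
      by subst w; rewrite Dirr in Hzw.
    by move: Hzw; rewrite /compose (negbTE Hzw') => /and3P [].
move: Hg => /allPn [y Hy Gy].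
move: Hu Hs Hc Hall Hn; case/splitPr: Hy => s1 s2 Hu Hs Hc Hall Hn.
have Hc' : cycle D ((y :: s2) ++ s1) by rewrite -rot_size_cat rot_cycle.
have Hu' : uniq ((y :: s2) ++ s1) by rewrite -rot_size_cat rot_uniq.
have Hmem : forall z, (z \in (y :: s2) ++ s1) = (z \in s1 ++ y :: s2).
  by move=> z; rewrite -rot_size_cat mem_rot.
have Hall' : all (fun z => z \notin Fset) ((y :: s2) ++ s1).
  by apply/allP => z; rewrite Hmem => /(allP Hall).
have Hs' : min_cycle_len dir <= size ((y :: s2) ++ s1).
  by rewrite -rot_size_cat size_rot.
move: Hc'; rewrite cat_cons /= rcons_path => /andP [Hp Hlast].
have Hlt : tag (last y (s2 ++ s1)) = tag y.
  apply/eqP; apply/negPn/negP => Hne.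
  have Fl : last y (s2 ++ s1) \notin Fset.
    by apply: (allP Hall'); rewrite cat_cons mem_last.
  have Fy : y \notin Fset by apply: (allP Hall'); rewrite mem_head.
  have [_ Gy'] := cross Hlast Hne Fl Fy.
  by rewrite Gy' in Gy.
have Htags := runH Hp Hall' Hu' Hlt.
apply: (same_tag_false (s := (y :: s2) ++ s1) (x0 := y)) => //.
- by move=> z Hz; apply/eqP; exact: (allP Htags z Hz).
- by rewrite cat_cons /= rcons_path Hp Hlast.
Qed.

Lemma Fset_card : (forall i, r i \notin M i) ->
  #|Fset| = \sum_i #|M i| + #|F0|.
Proof.
move=> HrM.
rewrite (card_sig Fset) -sum1_card [\sum_(i in F0) 1]big_mkcond -big_split /=.
apply: eq_bigr => i _.
case: ifP => Hi.
  have -> : [set a : T i | Tagged T a \in Fset] = r i |: M i.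
    by apply/setP => a; rewrite !inE /= Hi /= orbC.
  by rewrite cardsU1 HrM addnC.
have -> : [set a : T i | Tagged T a \in Fset] = M i.
  by apply/setP => a; rewrite !inE /= Hi /= orbF.
by rewrite addn0.
Qed.

End Part2.


Lemma ktree_clique K (S : finType) (h : rel S) (C : {set S}) :
  ktree K h -> is_clique h C -> #|C| <= K.+1.
Proof.
move=> [_ [phi [Hinj Hpre]]] HC.
case: (set_0Vmem C) => [-> | [x0 Hx0]]; first by rewrite cards0.
case: (@arg_maxnP _ x0 (mem C) (fun x => val (phi x)) Hx0) => v Hv Hmax.
have Hsub : C :\ v \subset [set u | h u v & phi u < phi v].
  apply/subsetP => u; rewrite !inE => /andP [Huv Hu].
  rewrite HC //= ltn_neqAle; move: (Hmax u Hu) => /= ->; rewrite andbT.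
  apply/negP => /eqP /val_inj /Hinj Heq; by rewrite Heq eqxx in Huv.
rewrite (cardsD1 v C); move: Hv => /= ->; rewrite add1n ltnS.
apply: leq_trans (subset_leq_card Hsub) _.
by rewrite (Hpre v).2 geq_minl.
Qed.

Lemma arA a B : a < B -> B = a -> False. Proof. lia. Qed.
Lemma arB a B : B = a + B.+1 -> False. Proof. lia. Qed.
Lemma arC a b B : a < B -> a = b + B.+1 -> False. Proof. lia. Qed.
Lemma arE a b B : a + B.+1 = b + B.+1 -> a = b. Proof. lia. Qed.
Lemma arD a B : B < a -> a < B -> False. Proof. lia. Qed.
Lemma arF a b B : a + B.+1 < b -> b < B -> False. Proof. lia. Qed.
Lemma arG a b B : a + B.+1 < b + B.+1 -> b < a -> False. Proof. lia. Qed.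
Lemma arH a b B : a + B.+1 < b + B.+1 -> a < b. Proof. lia. Qed.
Lemma arI a B : B < a + B.+1. Proof. lia. Qed.
Lemma arJ a b B : a < B -> a < b + B.+1. Proof. lia. Qed.

Definition preA (T : finType) (e : rel T) (A : {set T}) (o : T -> nat) x :=
  [set y in A | e y x & o y < o x].

Lemma clique_add (T : finType) (e : rel T) (w : T) (N : {set T}) :
  symmetric e -> is_clique e N -> (forall y, y \in N -> e y w) -> is_clique e (w |: N).
Proof.
move=> Hsym HN Hw a b; rewrite !inE => /orP [/eqP -> | Ha] /orP [/eqP -> | Hb] Hab.
- by rewrite eqxx in Hab.
- by rewrite Hsym Hw.
- exact: Hw.
- exact: HN.
Qed.

Lemma reorder (T : finType) (e : rel T) : symmetric e -> forall n (A Q : {set T}) (o : T -> nat),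
  #|A| = n -> injective o -> (forall x, x \in A -> is_clique e (preA e A o x)) ->
  Q \subset A -> is_clique e Q ->
  exists o' : T -> nat, [/\ injective o', (forall x, x \in A -> is_clique e (preA e A o' x))
     & (forall x y, x \in Q -> y \in A -> y \notin Q -> o' x < o' y)].
Proof.
move=> Hsym n; elim: n => [|n IH] A Q o HA Hinj Hcl HQA HQ.
  exists o; split => //.
  by move=> x y _; move/eqP: HA; rewrite cards_eq0 => /eqP ->; rewrite in_set0.
have [x0 Hx0] : exists x, x \in A by apply/card_gt0P; rewrite HA.
case: (@arg_maxnP _ x0 (mem A) o Hx0) => w Hw0 Hmax0.
have Hw : w \in A by exact: Hw0.
have Hmax : forall y, y \in A -> o y <= o w by move=> y Hy; exact: Hmax0 y Hy.
set A' := A :\ w.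
have HA' : #|A'| = n by move: HA; rewrite (cardsD1 w A) Hw add1n => -[].
set N := [set y in A' | e y w].
have HNA : N \subset A' by apply/subsetP => y; rewrite inE => /andP [].
have HN : is_clique e N.
  apply: (is_clique_sub _ (Hcl w Hw)); apply/subsetP => y; rewrite !inE => /andP [/andP [Hyw HyA] Hyw'].
  rewrite HyA Hyw' /= ltn_neqAle Hmax // andbT.
  by apply/negP => /eqP /Hinj Heq; rewrite Heq eqxx in Hyw.
have Hcl' : forall x, x \in A' -> is_clique e (preA e A' o x).
  move=> x; rewrite inE => /andP [_ HxA]; apply: (is_clique_sub _ (Hcl x HxA)).
  by apply/subsetP => y; rewrite !inE => /andP [/andP [_ ->] ->].
have HwN : w \notin N by rewrite !inE eqxx.
have HwE : forall y, y \in A -> e y w -> y != w -> y \in N.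
  by move=> y HyA Hyw Hne; rewrite !inE Hne HyA Hyw.
case: (boolP (w \in Q)) => HwQ.
-
  have [o' [Hinj' Hcl'' HN']] := IH A' N o HA' Hinj Hcl' HNA HN.
  have [B Hbig] : exists B, forall z, o' z < B.
    by exists (\max_(z : T) o' z).+1 => z; rewrite ltnS; apply: leq_bigmax.
  have HQN : forall y, y \in Q -> y != w -> y \in N.
    move=> y HyQ Hyw; apply: HwE => //; first exact: (subsetP HQA).
    exact: HQ.
  pose o2 z := if z == w then B else if z \in Q then o' z else o' z + B.+1.
  exists o2; split.
  + move=> x y; rewrite /o2.
    have Bx := Hbig x; have By := Hbig y.
    case: (eqVneq x w) => [->|Hxw]; case: (eqVneq y w) => [->|Hyw] //.
    * case: (y \in Q) => H; exfalso; first [exact: arA By H | exact: arB H].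
    * case: (x \in Q) => H; exfalso; first [exact: arA Bx (esym H) | exact: arB (esym H)].
    * case: (x \in Q); case: (y \in Q) => H; first [ exact: Hinj' H
        | exfalso; exact: arC Bx H | exfalso; exact: arC By (esym H) | exact: Hinj' (arE H) ].
  + move=> x HxA.
    case: (eqVneq x w) => [Exw | Hxw].
      subst x; apply: (is_clique_sub _ HN); apply/subsetP => y.
      rewrite !inE /o2 eqxx => /and3P [HyA Hyw Hlt].
      case: (eqVneq y w) => [Eyw | Hyw'].
        by subst y; rewrite eqxx ltnn in Hlt.
      by rewrite HyA Hyw.
    have HxA' : x \in A' by rewrite !inE Hxw HxA.
    case: (boolP (x \in Q)) => HxQ.
      apply: (is_clique_sub _ (Hcl'' x HxA')); apply/subsetP => y.
      rewrite !inE /o2 (negbTE Hxw) HxQ => /and3P [HyA Hyx Hlt].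
      have Bx := Hbig x; have By := Hbig y.
      case: (eqVneq y w) => [Eyw | Hyw]; first by subst y; rewrite eqxx in Hlt; exfalso; exact: arD Hlt Bx.
      rewrite (negbTE Hyw) in Hlt; rewrite HyA Hyx /=.
      by move: Hlt; case: (y \in Q) => // H; exfalso; exact: arF H Bx.
    case: (boolP (x \in N)) => HxN.
      apply: (is_clique_sub _ (clique_add (w:=w) Hsym HN _)); last first.
        by move=> y; rewrite /N !inE => /andP [].
      apply/subsetP => y.
      rewrite !inE /o2 (negbTE Hxw) (negbTE HxQ) => /and3P [HyA Hyx Hlt].
      case: (eqVneq y w) => [-> | Hyw]; first by [].
      rewrite (negbTE Hyw) in Hlt.
      case: (boolP (y \in Q)) => HyQ.
        by move: (HQN y HyQ Hyw); rewrite !inE => /andP [/andP [_ ->] ->].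
      rewrite (negbTE HyQ) in Hlt.
      have HyN : y \in N.
        apply/negPn/negP => HyN.
        have HyA' : y \in A' by rewrite !inE Hyw HyA.
        exact: arG Hlt (HN' x y HxN HyA' HyN).
      by move: HyN; rewrite !inE => /andP [/andP [_ ->] ->].
    apply: (is_clique_sub _ (Hcl'' x HxA')); apply/subsetP => y.
    rewrite !inE /o2 (negbTE Hxw) (negbTE HxQ) => /and3P [HyA Hyx Hlt].
    case: (eqVneq y w) => [Eyw | Hyw].
      subst y; exfalso; move/negP: HxN; apply; apply: HwE => //.
      by rewrite Hsym.
    rewrite (negbTE Hyw) in Hlt; rewrite HyA Hyx /=.
    case: (boolP (y \in Q)) => HyQ.
      have HyN := HQN y HyQ Hyw.
      exact: HN' y x HyN HxA' HxN.
    by rewrite (negbTE HyQ) in Hlt; exact: arH Hlt.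
  + move=> x y HxQ HyA HyQ.
    have Hyw : y != w by apply/eqP => E; subst y; rewrite HwQ in HyQ.
    rewrite /o2 (negbTE Hyw) (negbTE HyQ) HxQ.
    have Bx := Hbig x; case: (x == w); [exact: arI | exact: arJ].
-
  have HQA' : Q \subset A'.
    apply/subsetP => y HyQ; rewrite !inE (subsetP HQA _ HyQ) andbT.
    by apply/eqP => E; subst y; rewrite HyQ in HwQ.
  have [o' [Hinj' Hcl'' HQ']] := IH A' Q o HA' Hinj Hcl' HQA' HQ.
  have [B Hbig] : exists B, forall z, o' z < B.
    by exists (\max_(z : T) o' z).+1 => z; rewrite ltnS; apply: leq_bigmax.
  pose o2 z := if z == w then B else o' z.
  exists o2; split.
  + move=> x y; rewrite /o2.
    have Bx := Hbig x; have By := Hbig y.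
    case: (eqVneq x w) => [->|Hxw]; case: (eqVneq y w) => [->|Hyw] // H.
    * by exfalso; exact: arA By H.
    * by exfalso; exact: arA Bx (esym H).
    * exact: Hinj'.
  + move=> x HxA.
    case: (eqVneq x w) => [Exw | Hxw].
      subst x; apply: (is_clique_sub _ HN); apply/subsetP => y.
      rewrite !inE /o2 eqxx => /and3P [HyA Hyw Hlt].
      case: (eqVneq y w) => [Eyw | Hyw'].
        by subst y; rewrite eqxx ltnn in Hlt.
      by rewrite HyA Hyw.
    have HxA' : x \in A' by rewrite !inE Hxw HxA.
    apply: (is_clique_sub _ (Hcl'' x HxA')); apply/subsetP => y.
    rewrite !inE /o2 (negbTE Hxw) => /and3P [HyA Hyx Hlt].
    case: (eqVneq y w) => [Eyw | Hyw]; first by subst y; rewrite eqxx in Hlt; exfalso; exact: arD Hlt (Hbig x).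
    by rewrite (negbTE Hyw) in Hlt; rewrite HyA Hyx.
  + move=> x y HxQ HyA HyQ.
    have Hxw : x != w by apply/eqP => E; subst x; rewrite HxQ in HwQ.
    rewrite /o2 (negbTE Hxw).
    case: (eqVneq y w) => [_ | Hyw]; first exact: Hbig.
    apply: HQ' => //; by rewrite !inE Hyw HyA.
Qed.


Definition Pre (S : finType) (G : rel S) (r : S -> nat) x := [set y | G y x & r y < r x].

Lemma clique_mono (S : finType) (h h' : rel S) A :
  (forall x y, h x y -> h' x y) -> is_clique h A -> is_clique h' A.
Proof. by move=> Hs Hc x y Hx Hy Hxy; apply: Hs; apply: Hc. Qed.

Section Core.
Unset Implicit Arguments.
Variables (S : finType) (r : S -> nat) (K : nat).
Set Implicit Arguments.
Hypothesis rinj : injective r.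
Hypothesis rlt : forall x, r x < #|S|.

Lemma surj m : m < #|S| -> exists x, r x = m.
Proof.
move=> Hm.
have Hu : uniq [seq r x | x <- enum S] by rewrite map_inj_uniq ?enum_uniq.
have Hsub : {subset [seq r x | x <- enum S] <= iota 0 #|S|}.
  by move=> n /mapP [x _ ->]; rewrite mem_iota add0n rlt.
have Hsz : size (iota 0 #|S|) <= size [seq r x | x <- enum S].
  by rewrite size_iota size_map -cardT.
have [_ Heq] := uniq_min_size Hu Hsub Hsz.
have : m \in iota 0 #|S| by rewrite mem_iota.
by rewrite -Heq => /mapP [x _ ->]; exists x.
Qed.

Lemma cardA m : #|[set x | r x < m]| <= m.
Proof.
have Hu : uniq [seq r x | x <- enum [set x | r x < m]] by rewrite map_inj_uniq ?enum_uniq.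
have Hsub : {subset [seq r x | x <- enum [set x | r x < m]] <= iota 0 m}.
  by move=> n /mapP [x]; rewrite mem_enum inE => Hx ->; rewrite mem_iota.
by have := uniq_leq_size Hu Hsub; rewrite size_map size_iota -cardE.
Qed.


Lemma extend (h : rel S) : symmetric h -> forall m, m <= #|S| ->
  (forall z, r z < m -> is_clique h (Pre h r z) /\ #|Pre h r z| = minn K (r z)) ->
  forall C : {set S}, C \subset [set x | r x < m] -> is_clique h C -> #|C| <= K ->
  exists Q : {set S}, [/\ Q \subset [set x | r x < m], C \subset Q, is_clique h Q & #|Q| = minn K m].
Proof.
move=> Hsym; elim => [|m IH] Hm Hpre C HC HCl HCK.
  exists set0; split.
  - exact: sub0set.
  - by apply/subsetP => x /(subsetP HC); rewrite inE ltn0.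
  - by move=> x y; rewrite inE.
  - by rewrite cards0 minn0.
have [y Hy] := surj Hm.
have := Hpre y; rewrite Hy ltnSn => /(_ isT) [Pcl Pcard].
have HPA : Pre h r y \subset [set x | r x < m].
  by apply/subsetP => u; rewrite !inE Hy => /andP [].
have HyP : y \notin Pre h r y by rewrite !inE ltnn andbF.
have HPz : is_clique h (y |: Pre h r y).
  by apply: clique_add Hsym Pcl _ => u; rewrite !inE => /andP [].
have Hsplit : forall x, r x < m.+1 -> x = y \/ r x < m.
  move=> x; rewrite ltnS leq_eqVlt => /orP [/eqP Hx | ->]; last by right.
  by left; apply: rinj; rewrite Hx Hy.
have HPz_card : #|y |: Pre h r y| = (minn K m).+1 by rewrite cardsU1 HyP Pcard.
case: (ltnP m K) => HmK.
- have Hmin : minn K m = m by apply/minn_idPr/ltnW.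
  have Hmin1 : minn K m.+1 = m.+1 by apply/minn_idPr.
  have HPeq : Pre h r y = [set x | r x < m].
    by apply/eqP; rewrite eqEcard HPA /= Pcard Hmin; exact: cardA.
  exists (y |: Pre h r y); split => //.
  + apply/subsetP => u; rewrite !inE => /orP [/eqP -> | Hu]; first by rewrite Hy.
    by move: Hu; rewrite Hy => /andP [_ /ltnW].
  + apply/subsetP => u /(subsetP HC); rewrite inE => /Hsplit [-> | Hu].
      by rewrite !inE eqxx.
    by rewrite in_setU1 HPeq inE Hu orbT.
  + by rewrite HPz_card Hmin Hmin1.
- have Hmin : minn K m = K by apply/minn_idPl.
  have Hmin1 : minn K m.+1 = K by apply/minn_idPl/ltnW.
  case: (boolP (y \in C)) => HyC.
  + have HCsub : C \subset y |: Pre h r y.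
      apply/subsetP => u Hu; case: (eqVneq u y) => [-> | Huy]; first by rewrite !inE eqxx.
      move: (subsetP HC u Hu); rewrite inE => /Hsplit [Ey | Hlt].
        by rewrite Ey eqxx in Huy.
      by rewrite !inE Hy Hlt andbT (HCl u y Hu HyC Huy) orbT.
    have : ~~ (y |: Pre h r y \subset C).
      apply/negP => Hs; have := subset_leq_card Hs.
      by rewrite HPz_card Hmin => /leq_trans /(_ HCK); rewrite ltnn.
    move=> /subsetPn [z Hz HzC].
    exists ((y |: Pre h r y) :\ z); split.
    * apply/subsetP => u; rewrite !inE => /andP [_ /orP [/eqP -> | /andP [_ Hu]]].
        by rewrite Hy.
      by rewrite Hy in Hu; apply: ltnW.
    * apply/subsetP => u Hu; rewrite !inE.
      have -> : (u != z) by apply/eqP => E; subst u; rewrite Hu in HzC.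
      by move: (subsetP HCsub u Hu); rewrite !inE.
    * exact: is_clique_sub (subD1set _ _) HPz.
    * by move: HPz_card; rewrite (cardsD1 z) Hz Hmin Hmin1 add1n => -[].
  + have HC' : C \subset [set x | r x < m].
      apply/subsetP => u Hu; move: (subsetP HC u Hu); rewrite !inE => /Hsplit [Ey | //].
      by subst u; rewrite Hu in HyC.
    have Hpre' : forall z, r z < m -> is_clique h (Pre h r z) /\ #|Pre h r z| = minn K (r z).
      by move=> z Hz; apply: Hpre; apply: ltnW.
    have [Q [HQA HCQ HQcl HQcard]] := IH (ltnW Hm) Hpre' C HC' HCl HCK.
    exists Q; split => //.
    * apply: (subset_trans HQA); apply/subsetP => u; rewrite !inE; exact: ltnW.
    * by rewrite HQcard Hmin Hmin1.
Qed.

Lemma build (G : rel S) : symmetric G -> irreflexive G ->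
  (forall x, is_clique G (Pre G r x) /\ #|Pre G r x| <= K) ->
  forall m, m <= #|S| -> exists h : rel S,
  [/\ symmetric h, irreflexive h, (forall x y, h x y -> r x < m),
      (forall x, r x < m -> is_clique h (Pre h r x) /\ #|Pre h r x| = minn K (r x))
    & (forall x y, r x < m -> r y < m -> G x y -> h x y)].
Proof.
move=> GS GI GP; elim => [|m IH] Hm.
  by exists (fun _ _ => false); split.
have [h [Hsym Hirr Hdom Hpre HG]] := IH (ltnW Hm).
have [y Hy] := surj Hm.
have Hsplit : forall x, r x < m.+1 -> x = y \/ r x < m.
  move=> x; rewrite ltnS leq_eqVlt => /orP [/eqP Hx | ->]; last by right.
  by left; apply: rinj; rewrite Hx Hy.
have [GPcl GPcard] := GP y.
have HCA : Pre G r y \subset [set x | r x < m].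
  by apply/subsetP => u; rewrite !inE Hy => /andP [].
have HCh : is_clique h (Pre G r y).
  move=> a b Ha Hb Hab; apply: HG; last exact: GPcl.
  - by move: (subsetP HCA a Ha); rewrite inE.
  - by move: (subsetP HCA b Hb); rewrite inE.
have [Q [HQA HCQ HQcl HQcard]] := extend Hsym (ltnW Hm) Hpre HCA HCh GPcard.
have HyQ : y \notin Q.
  by apply/negP => /(subsetP HQA); rewrite inE Hy ltnn.
pose h' a b := [|| h a b, (a == y) && (b \in Q) | (b == y) && (a \in Q)].
have Hhh' : forall a b, h a b -> h' a b by move=> a b H; rewrite /h' H.
exists h'; split.
- move=> a b; rewrite /h' Hsym; congr (_ || _); exact: orbC.
- move=> a; rewrite /h' Hirr orbb /=.
  by case: (eqVneq a y) => [->|] //=; rewrite (negbTE HyQ).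
- move=> a b; rewrite /h' => /or3P [/Hdom Ha | /andP [/eqP -> _] | /andP [_ HaQ]].
  + exact: ltnW.
  + by rewrite Hy.
  + by move: (subsetP HQA a HaQ); rewrite inE => /ltnW.
- move=> x /Hsplit [-> | Hx].
  + have HPQ : Pre h' r y = Q.
      apply/setP => u; rewrite /Pre !inE /h' eqxx (negbTE HyQ) andbF /=.
      have -> : h u y = false.
        by apply/negP; rewrite Hsym => /Hdom; rewrite Hy ltnn.
      rewrite /=; case HuQ: (u \in Q) => //=.
      by move: (subsetP HQA u HuQ); rewrite inE Hy.
    rewrite HPQ Hy; split => //.
    exact: clique_mono Hhh' HQcl.
  + have Hxy : (x == y) = false by apply/negbTE/eqP => E; subst x; rewrite Hy ltnn in Hx.
    have HPeq : Pre h' r x = Pre h r x.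
      apply/setP => u; rewrite /Pre !inE /h' Hxy /= orbF.
      case: (ltnP (r u) (r x)) => Hux; last by rewrite !andbF.
      have -> : (u == y) = false.
        by apply/negbTE/eqP => E; subst u; rewrite Hy in Hux; have := ltn_trans Hux Hx; rewrite ltnn.
      by rewrite orbF.
    rewrite HPeq; have [Hc Hcard] := Hpre x Hx; split => //.
    exact: clique_mono Hhh' Hc.
- move=> a b /Hsplit Ha /Hsplit Hb Hab.
  case: Ha => [Ea | Ha]; case: Hb => [Eb | Hb].
  + by subst a b; rewrite GI in Hab.
  + subst a; apply/or3P; apply: Or32; rewrite eqxx /=; apply: (subsetP HCQ).
    by rewrite !inE Hy Hb andbT GS.
  + subst b; apply/or3P; apply: Or33; rewrite eqxx /=; apply: (subsetP HCQ).
    by rewrite !inE Hy Ha andbT.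
  + by apply: Hhh'; apply: HG.
Qed.

Lemma ktree_of_rank (G : rel S) : symmetric G -> irreflexive G ->
  (forall x, is_clique G (Pre G r x) /\ #|Pre G r x| <= K) ->
  exists h : rel S, ktree K h /\ (forall x y, G x y -> h x y).
Proof.
move=> GS GI GP.
have [h [Hsym Hirr Hdom Hpre HG]] := build GS GI GP (leqnn #|S|).
exists h; split; last by move=> x y; apply: HG.
split; first by split.
exists (fun x => Ordinal (rlt x)); split.
  by move=> x y /(congr1 val) /= /rinj.
move=> v; exact: Hpre.
Qed.

End Core.

Lemma ktree_of_order (S : finType) (G : rel S) (o : S -> nat) K :
  symmetric G -> irreflexive G -> injective o ->
  (forall x, is_clique G [set y | G y x & o y < o x] /\ #|[set y | G y x & o y < o x]| <= K) ->
  exists h : rel S, ktree K h /\ (forall x y, G x y -> h x y).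
Proof.
move=> GS GI oinj GP.
pose rk x := #|[set y | o y < o x]|.
have Hmono : forall x y, (rk y < rk x) = (o y < o x).
  move=> x y; apply/idP/idP => H.
    rewrite ltnNge; apply/negP => Hle.
    have : rk x <= rk y.
      apply: subset_leq_card; apply/subsetP => z; rewrite !inE => Hz.
      exact: leq_trans Hz Hle.
    by rewrite leqNgt H.
  apply: proper_card; apply/properP; split.
    by apply/subsetP => z; rewrite !inE => Hz; exact: ltn_trans Hz H.
  by exists y; rewrite !inE ?ltnn.
have rinj : injective rk.
  move=> x y Hxy; apply: oinj; case: (ltngtP (o x) (o y)) => // H.
    by rewrite -(Hmono y x) Hxy ltnn in H.
  by rewrite -(Hmono x y) Hxy ltnn in H.
have rlt : forall x, rk x < #|S|.
  move=> x; rewrite -cardsT; apply: proper_card; apply/properP; split.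
    exact: subsetT.
  by exists x; rewrite !inE ?ltnn.
apply: (@ktree_of_rank S rk K rinj rlt G GS GI) => x.
have [Hc Hcard] := GP x.
have -> : Pre G rk x = [set y | G y x & o y < o x].
  by apply/setP => y; rewrite !inE Hmono.
by split.
Qed.


Lemma lexlt a b p q M : a < M -> b < M -> p * M + a < q * M + b -> p < q \/ (p = q /\ a < b).
Proof.
move=> Ha Hb H; case: (ltngtP p q) => Hpq; first by left.
  exfalso; have : q.+1 * M <= p * M by rewrite leq_mul2r Hpq orbT.
  rewrite mulSn; lia.
right; subst q; split => //; lia.
Qed.

Lemma lexeq a b p q M : a < M -> b < M -> p * M + a = q * M + b -> p = q /\ a = b.
Proof.
move=> Ha Hb H.
have Hp : p = q.
  case: (ltngtP p q) => Hpq //; exfalso.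
  - have : p.+1 * M <= q * M by rewrite leq_mul2r Hpq orbT.
    rewrite mulSn; lia.
  - have : q.+1 * M <= p * M by rewrite leq_mul2r Hpq orbT.
    rewrite mulSn; lia.
subst q; split => //; lia.
Qed.

Lemma arK u n : 1 + u <= n -> u <= n - 1. Proof. lia. Qed.

Lemma ug_sym (S : finType) (h : rel S) : symmetric (ug h).
Proof. by move=> x y; rewrite /ug orbC. Qed.

Lemma clique_image (A B : finType) (eA : rel A) (eB : rel B) (f : A -> B) (C : {set A}) :
  (forall x y, eA x y -> eB (f x) (f y)) -> is_clique eA C -> is_clique eB (f @: C).
Proof.
move=> Hf HC x' y' /imsetP [x Hx ->] /imsetP [y Hy ->] Hne; apply: Hf; apply: HC => //.
by apply/eqP => E; subst; rewrite eqxx in Hne.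
Qed.

Section Part3.
Unset Implicit Arguments.
Variables (k : nat) (e0 : rel 'I_k) (T : 'I_k -> finType)
  (e : forall i, rel (T i)) (R : forall i, {set T i}) (c t t0 : nat)
  (S0 : finType) (h0 : rel S0) (g0 : 'I_k -> S0) (phi0 : S0 -> 'I_#|S0|)
  (o : forall i, T i -> nat).
Hypothesis eirr : forall i, irreflexive (e i).
Hypothesis Rcl : forall i, is_clique (ug (e i)) (R i) /\ #|R i| <= c.
Hypothesis Htw : forall i, tw_le (e i) t.
Hypothesis h0sym : symmetric h0.
Hypothesis g0inj : injective g0.
Hypothesis g0edge : forall i j, ug e0 i j -> h0 (g0 i) (g0 j).
Hypothesis phi0inj : injective phi0.
Hypothesis Hpre0 : forall v, is_clique h0 [set u | h0 u v & phi0 u < phi0 v] /\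
              #|[set u | h0 u v & phi0 u < phi0 v]| = minn t0 (phi0 v).
Hypothesis oinj : forall i, injective (o i).
Hypothesis ocl : forall i x, is_clique (ug (e i)) [set y | ug (e i) y x & o i y < o i x].
Hypothesis oQ : forall i x y, x \in R i -> y \notin R i -> o i x < o i y.
Set Implicit Arguments.

Lemma Pbound i x : #|[set y | ug (e i) y x & o i y < o i x]| <= t.
Proof.
have [Si [hi [gi [kti giinj giedge]]]] := Htw i.
have HxP : x \notin [set y | ug (e i) y x & o i y < o i x] by rewrite inE ltnn andbF.
have Hcl : is_clique (ug (e i)) (x |: [set y | ug (e i) y x & o i y < o i x]).
  have Hw : forall y, y \in [set y | ug (e i) y x & o i y < o i x] -> ug (e i) y x by move=> y; rewrite inE => /andP [].
  exact: (clique_add (@ug_sym _ (e i)) (ocl i x) Hw).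
have := ktree_clique kti (clique_image giedge Hcl).
by rewrite card_imset // cardsU1 HxP add1n ltnS.
Qed.

Definition e0' : rel 'I_k := fun i j => h0 (g0 i) (g0 j).
Definition G := ug (compose e0' e R).

Lemma G_same i (a b : T i) : G (Tagged T a) (Tagged T b) = ug (e i) a b.
Proof. by rewrite /G /ug !(@compose_same k e0' T e R). Qed.

Lemma G_diff i j (a : T i) (b : T j) : i != j ->
  G (Tagged T a) (Tagged T b) = [&& h0 (g0 i) (g0 j), a \in R i & b \in R j].
Proof.
move=> Hij; rewrite /G /ug !(@compose_diff k e0' T e R) // 1?eq_sym // /e0' (h0sym (g0 j)).
by case: (h0 _ _); case: (a \in R i); case: (b \in R j).
Qed.

Definition Mb := (\max_(x : {i : 'I_k & T i}) o (tag x) (tagged x)).+1.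

Lemma oM i a : o i a < Mb.
Proof. rewrite /Mb ltnS; exact: (@leq_bigmax _ (fun x => o (tag x) (tagged x)) (Tagged T a)). Qed.

Definition pp (x : {i : 'I_k & T i}) :=
  if tagged x \in R (tag x) then val (phi0 (g0 (tag x))) else #|S0| + tag x.
Definition ord x := pp x * Mb + o (tag x) (tagged x).

Lemma ord_inj : injective ord.
Proof.
move=> [i a] [j b]; rewrite /ord /= => H.
have [Hp Ho] := lexeq (oM a) (oM b) H.
have Hij : i = j.
  move: Hp; rewrite /pp /=; case Ha: (a \in R i); case Hb: (b \in R j) => Hp.
  - by apply: g0inj; apply: phi0inj; apply: val_inj.
  - by have := ltn_ord (phi0 (g0 i)); rewrite Hp ltnNge leq_addr.
  - by have := ltn_ord (phi0 (g0 j)); rewrite -Hp ltnNge leq_addr.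
  - by apply: val_inj; apply: (addnI Hp).
subst j; by rewrite (oinj i a b Ho).
Qed.

Lemma G_sym : symmetric G. Proof. exact: ug_sym. Qed.

Lemma G_irr : irreflexive G.
Proof. by move=> [i a]; rewrite G_same /ug eirr. Qed.

Lemma ordE i (a : T i) : ord (Tagged T a) = pp (Tagged T a) * Mb + o i a.
Proof. by []. Qed.

Lemma ppR i (a : T i) : a \in R i -> pp (Tagged T a) = phi0 (g0 i).
Proof. by rewrite /pp /= => ->. Qed.

Lemma ppN i (a : T i) : a \notin R i -> pp (Tagged T a) = #|S0| + i.
Proof. by rewrite /pp /= => /negbTE ->. Qed.

Lemma preG (x : {i : 'I_k & T i}) :
  is_clique G [set y | G y x & ord y < ord x] /\
  #|[set y | G y x & ord y < ord x]| <= maxn t (c * (t0 + 1) - 1).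
Proof.
case: x => i a.
case: (boolP (a \in R i)) => Ha.
- pose P0 := [set j | h0 (g0 j) (g0 i) & phi0 (g0 j) < phi0 (g0 i)].
  pose J := i |: P0.
  pose U := [set y : {i : 'I_k & T i} | (tag y \in J) && (tagged y \in R (tag y))].
  have HXU : [set y | G y (Tagged T a) & ord y < ord (Tagged T a)] \subset U :\ Tagged T a.
    apply/subsetP => -[j b]; rewrite !inE => /andP [HG Hlt].
    rewrite ordE (ppR Ha) in Hlt.
    case: (eqVneq j i) => [Eji | Hji].
      subst j; rewrite G_same in HG.
      case: (boolP (b \in R i)) => Hb.
        rewrite ordE (ppR Hb) in Hlt.
        have Hne : existT (fun i => T i) i b != existT (fun i => T i) i a.
          by apply/eqP => E; move: Hlt; rewrite (eq_from_Tagged E) ltnn.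
        by rewrite Hne.
      exfalso; rewrite ordE (ppN Hb) in Hlt.
      have [Hpp | [Hpp _]] := lexlt (oM b) (oM a) Hlt.
      + by have := ltn_trans (ltn_ord (phi0 (g0 i))) (leq_ltn_trans (leq_addr i #|S0|) Hpp); rewrite ltnn.
      + by have := ltn_ord (phi0 (g0 i)); rewrite -Hpp ltnNge leq_addr.
    rewrite G_diff // in HG; move/and3P: HG => [Hh Hb _].
    rewrite ordE (ppR Hb) in Hlt.
    have Hne : existT (fun i => T i) j b != existT (fun i => T i) i a.
      by apply/eqP => E; move: (congr1 tag E) => /= Eji; rewrite Eji eqxx in Hji.
    rewrite Hne /=.
    have [Hpp | [Hpp _]] := lexlt (oM b) (oM a) Hlt.
      by rewrite Hh Hpp Hb.
    by exfalso; move/val_inj/phi0inj/g0inj: Hpp => E; rewrite E eqxx in Hji.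
  have HUcl : is_clique G U.
    move=> [j b] [l d]; rewrite !inE /= => /andP [Hj Hb] /andP [Hl Hd] Hne.
    case: (eqVneq j l) => [Ejl | Hjl].
      subst l; rewrite G_same; apply: (Rcl j).1 => //.
      by apply/eqP => E; subst d; rewrite eqxx in Hne.
    rewrite G_diff // Hb Hd !andbT.
    move: Hj Hl; rewrite ?inE => /orP [/eqP Ej | Hj] /orP [/eqP El | Hl].
    + by subst j l; rewrite eqxx in Hjl.
    + by subst j; move: Hl => /andP [Hl _]; rewrite h0sym.
    + by subst l; move: Hj => /andP [Hj _].
    + apply: (Hpre0 (g0 i)).1; rewrite ?inE //.
      by apply/eqP => /g0inj E; rewrite E eqxx in Hjl.
  have HP0 : #|P0| <= t0.
    rewrite -(card_imset _ g0inj).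
    apply: leq_trans (_ : #|[set u | h0 u (g0 i) & phi0 u < phi0 (g0 i)]| <= t0).
      apply: subset_leq_card; apply/subsetP => u /imsetP [j Hj ->].
      by move: Hj; rewrite !inE.
    by rewrite (Hpre0 (g0 i)).2 geq_minl.
  have HJ : #|J| <= t0.+1.
    by rewrite /J cardsU1 -add1n; apply: leq_add => //; exact: leq_b1.
  have HUcard : #|U| <= c * t0.+1.
    rewrite card_sig.
    apply: leq_trans (_ : \sum_j (if j \in J then c else 0) <= _).
      apply: leq_sum => j _; case HjJ: (j \in J).
        apply: leq_trans (Rcl j).2; apply: subset_leq_card; apply/subsetP => b.
        by rewrite !inE /= => /andP [].
      by rewrite leqn0 cards_eq0; apply/eqP/setP => b; move: HjJ; rewrite !inE /= => ->.
    have E : \sum_(j in J) c = \sum_j (if j \in J then c else 0) by rewrite big_mkcond.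
    by rewrite -E sum_nat_const mulnC leq_mul2l HJ orbT.
  have HxU : Tagged T a \in U by rewrite !inE /= Ha eqxx.
  split.
    exact: is_clique_sub (subset_trans HXU (subD1set U _)) HUcl.
  apply: leq_trans (subset_leq_card HXU) _.
  apply: leq_trans (leq_maxr t _).
  apply: arK; rewrite addn1; apply: leq_trans HUcard; by rewrite (cardsD1 (Tagged T a) U) HxU.
- pose Pi := [set b | ug (e i) b a & o i b < o i a].
  have HX : [set y | G y (Tagged T a) & ord y < ord (Tagged T a)] \subset Tagged T @: Pi.
    apply/subsetP => -[j b]; rewrite !inE => /andP [HG Hlt].
    case: (eqVneq j i) => [Eji | Hji]; last first.
      by rewrite G_diff // (negbTE Ha) !andbF in HG.
    subst j; rewrite G_same in HG.
    apply/imsetP; exists b => //; rewrite inE HG /=.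
    case: (boolP (b \in R i)) => Hb; first exact: oQ.
    rewrite !ordE (ppN Hb) (ppN Ha) in Hlt.
    have [Hpp | [_ Hoo]] := lexlt (oM b) (oM a) Hlt => //.
    by rewrite ltnn in Hpp.
  split.
    apply: is_clique_sub HX _; apply: clique_image (ocl i a).
    by move=> b d; rewrite G_same.
  apply: leq_trans (subset_leq_card HX) _.
  apply: leq_trans (leq_imset_card _ _) _.
  apply: leq_trans (Pbound a) _; exact: leq_maxl.
Qed.

Lemma tw_final : tw_le (compose e0 e R) (maxn t (c * (t0 + 1) - 1)).
Proof.
have [h [kh Hh]] := ktree_of_order G_sym G_irr ord_inj preG.
exists _, h, id; split => //.
move=> x y Hxy; apply: Hh.
have Hsub : forall u v, compose e0 e R u v -> compose e0' e R u v.
  move=> u v; rewrite /compose; case: ifP => // _ /and3P [H0 Hu Hv].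
  apply/and3P; split => //; apply: g0edge; by rewrite /ug H0.
by move: Hxy; rewrite /G /ug => /orP [/Hsub -> | /Hsub ->] //; rewrite orbT.
Qed.

End Part3.


Theorem mainTheorem10 (dir : bool) (k : nat) (e0 : rel 'I_k)
  (T : 'I_k -> finType) (e : forall i, rel (T i))
  (R0 : {set 'I_k}) (R : forall i, {set T i}) :
  is_graph dir e0 ->
  (forall i, is_graph dir (e i)) ->
  R0 != set0 -> bad dir e0 R0 ->
  (forall i, R i != set0) -> (forall i, bad dir (e i) (R i)) ->
  [/\ #|{: {i : 'I_k & T i}}| = \sum_(i < k) #|T i|
    /\ fvn dir e0 + \sum_(i < k) fvn dir (e i) <= fvn dir (compose e0 e R),
    (forall i, minimal_bad dir (e i) (R i)) ->
      fvn dir (compose e0 e R) = fvn dir e0 + \sum_(i < k) fvn dir (e i)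
      /\ bad dir (compose e0 e R) (compose_set R0 R)
  & forall (c t t0 : nat),
      (forall i, minimal_bad dir (e i) (R i)) ->
      (forall i, is_clique (ug (e i)) (R i) /\ #|R i| <= c) ->
      (forall i, chordal (ug (e i))) ->
      (forall i, tw_le (e i) t) ->
      tw_le e0 t0 ->
      tw_le (compose e0 e R) (maxn t (c * (t0 + 1) - 1))].
Proof.
move=> Hg0 Hge HR0 Hbad0 HRne Hbad.
have e0irr : irreflexive e0 by case: Hg0.
have eirr : forall i, irreflexive (e i) by move=> i; case: (Hge i).
have Hineq : fvn dir e0 + \sum_(i < k) fvn dir (e i) <= fvn dir (compose e0 e R).
  have [F [HF HFc]] := fvn_exF dir (compose e0 e R).
  have HJ := J_fvs e0irr HF.
  have Hc := J_card HF Hbad.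
  rewrite -HFc addnC; apply: leq_trans Hc; rewrite leq_add2l.
  exact: fvn_le HJ.
split.
- split => //.
  rewrite -cardsT card_sig; apply: eq_bigr => i _; rewrite -cardsT.
  by apply: eq_card => a; rewrite !inE.
- move=> Hmin.
  have Hex : forall i, exists p : T i * {set T i},
      [/\ p.1 \in R i, min_fvs dir (e i) p.2, R i :\ p.1 \subset p.2 & p.1 \notin p.2].
    move=> i; have /set0Pn [a Ha] := HRne i.
    have [Hb Hm] := Hmin i.
    have Hprop := properD1 Ha.
    case: (pselect (exists F, min_fvs dir (e i) F /\ R i :\ a \subset F)) => [[F [HF HRF]] | Hno].
      exists (a, F); split => //=.
      apply/negP => HaF; apply: (Hb F HF); apply/subsetP => u Hu.
      case: (eqVneq u a) => [-> // | Hua].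
      by apply: (subsetP HRF); rewrite !inE Hua.
    by exfalso; apply: (Hm _ Hprop) => F HF HRF; apply: Hno; exists F.
  pose r i := (sval (cid (Hex i))).1.
  pose M i := (sval (cid (Hex i))).2.
  have HrR : forall i, r i \in R i by move=> i; case: (svalP (cid (Hex i))).
  have HM : forall i, min_fvs dir (e i) (M i) by move=> i; case: (svalP (cid (Hex i))).
  have HRM : forall i, R i :\ r i \subset M i by move=> i; case: (svalP (cid (Hex i))).
  have HrM : forall i, r i \notin M i by move=> i; case: (svalP (cid (Hex i))).
  have [F0 [HF0 HF0c]] := fvn_exF dir e0.
  have Hfvs := @Fset_fvs dir k e0 T e R r M F0 eirr (fun i => (HM i).1) HRM HF0.
  have Hcard := Fset_card F0 HrM.
  have Heq : fvn dir (compose e0 e R) = fvn dir e0 + \sum_(i < k) fvn dir (e i).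
    apply/eqP; rewrite eqn_leq Hineq andbT.
    apply: leq_trans (fvn_le Hfvs) _; rewrite Hcard addnC -HF0c leq_add2l.
    by apply: leq_sum => i _; rewrite (HM i).2.
  split => //.
  move=> F [HF HFc] Hsub.
  have HJ := J_fvs e0irr HF.
  have Hc := J_card HF Hbad.
  have HJc : #|Jset R F| = fvn dir e0.
    apply/eqP; rewrite eqn_leq fvn_le // andbT.
    by move: Hc; rewrite HFc Heq addnC leq_add2r.
  apply: (Hbad0 (Jset R F)); first by split.
  apply/subsetP => i Hi; rewrite inE; apply/subsetP => a Ha.
  by rewrite inE; apply: (subsetP Hsub); rewrite inE /= Hi Ha.
- move=> c t t0 Hmin Hcl Hch Htw Htw0.
  have [S0 [h0 [g0 [[[h0irr h0sym] [phi0 [phi0inj Hpre0]]] g0inj g0edge]]]] := Htw0.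
  have Ho : forall i, exists o : T i -> nat, [/\ injective o,
      forall x, is_clique (ug (e i)) [set y | ug (e i) y x & o y < o x]
    & forall x y, x \in R i -> y \notin R i -> o x < o y].
    move=> i; have [phi [phiinj Hphi]] := Hch i.
    have Hinj : injective (fun x => val (phi x)) by move=> x y /val_inj /phiinj.
    have Hcl' : forall x, x \in [set: T i] ->
        is_clique (ug (e i)) (preA (ug (e i)) [set: T i] (fun x => val (phi x)) x).
      move=> x _.
      have -> : preA (ug (e i)) [set: T i] (fun x => val (phi x)) x =
                [set u | ug (e i) u x & phi u < phi x] by apply/setP => u; rewrite !inE.
      exact: Hphi.
    have [o [Hoi Hoc HoQ]] := @reorder _ (ug (e i)) (@ug_sym _ (e i)) #|[set: T i]| setT (R i)
        (fun x => val (phi x)) erefl Hinj Hcl' (subsetT _) (Hcl i).1.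
    exists o; split => //.
      move=> x; have := Hoc x (in_setT x).
      by have -> : preA (ug (e i)) [set: T i] o x = [set y | ug (e i) y x & o y < o x]
        by apply/setP => u; rewrite !inE.
    by move=> x y Hx Hy; apply: HoQ.
  pose o i := sval (cid (Ho i)).
  have Hoinj : forall i, injective (o i) by move=> i; case: (svalP (cid (Ho i))).
  have Hocl : forall i x, is_clique (ug (e i)) [set y | ug (e i) y x & o i y < o i x].
    by move=> i; case: (svalP (cid (Ho i))).
  have HoQ : forall i x y, x \in R i -> y \notin R i -> o i x < o i y.
    by move=> i; case: (svalP (cid (Ho i))).
  exact: (@tw_final k e0 T e R c t t0 S0 h0 g0 phi0 o eirr Hcl Htw h0sym g0inj g0edge
            phi0inj Hpre0 Hoinj Hocl HoQ).
Qed.
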